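(* Let $G$ be a finite simple undirected graph, $s\neq t$ vertices and $r\ge2$. Then $$NBP_r(s,t)\le NBP_r^{L}(s,t)+NBP_{r-2}(s,t),$$ and consequently $NBP_r(s,t)\le NBP_1(s,t)+\sum_{m=2}^{r}NBP_m^{L}(s,t)$.
   Context: A nonbacktracking walk of length $r$ from $s$ to $t$ is a sequence $(x_1,\dots,x_{r+1})$ with $x_1=s$, $x_{r+1}=t$, each $\{x_i,x_{i+1}\}$ an edge, and $x_i\ne x_{i+2}$ for $1\le i\le r-1$. $NBP_r(s,t)$ is the number of such walks ($NBP_0(s,t)=0$ for $s\neq t$), and $NBP_r^L(s,t)$ is the number of such walks whose last edge $\{x_r,x_{r+1}\}$ is different from the first edge $\{x_1,x_2\}$. *)

(* Defs.v *)
From mathcomp Require Import all_boot.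
Set Implicit Arguments. Unset Strict Implicit. Unset Printing Implicit Defensive.

Definition simple_graph (T : finType) (e : rel T) : Prop :=
  symmetric e /\ irreflexive e.

(* A walk (x_1, ..., x_{r+1}) is encoded as the sequence [:: x_1; ...; x_{r+1}]
   (0-indexed: nth i = x_{i+1}). *)
Definition nb_walk (T : finType) (e : rel T) (r : nat) (s t : T) (w : seq T) : bool :=
  [&& size w == r.+1,
      nth s w 0 == s,
      nth s w r == t,
      [forall i : 'I_r, e (nth s w i) (nth s w i.+1)] &
      [forall i : 'I_r.-1, nth s w i != nth s w i.+2]].

Definition same_edge (T : eqType) (a b c d : T) : bool :=
  ((a == c) && (b == d)) || ((a == d) && (b == c)).

Definition NBP (T : finType) (e : rel T) (r : nat) (s t : T) : nat :=
  #|[set w : r.+1.-tuple T | nb_walk e r s t w]|.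

Definition NBPL (T : finType) (e : rel T) (r : nat) (s t : T) : nat :=
  #|[set w : r.+1.-tuple T | nb_walk e r s t w &&
       ~~ same_edge (nth s w r.-1) (nth s w r) (nth s w 0) (nth s w 1)]|.

(* Main.v *)
Require Import Defs.
From mathcomp Require Import all_boot zify.

Lemma nbP (T : finType) (e : rel T) r s t (w : seq T) :
  nb_walk e r s t w <->
  [/\ size w = r.+1, nth s w 0 = s, nth s w r = t,
      (forall i, i < r -> e (nth s w i) (nth s w i.+1)) &
      (forall i, i.+1 < r -> nth s w i != nth s w i.+2)].
Proof.
rewrite /nb_walk; split.
- case/and5P => /eqP H1 /eqP H2 /eqP H3 /forallP H4 /forallP H5; split => //.
  + by move=> i Hi; exact: (H4 (Ordinal Hi)).
  + move=> i Hi; have Hi' : i < r.-1 by lia.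
    exact: (H5 (Ordinal Hi')).
- case=> H1 H2 H3 H4 H5; apply/and5P; split; try by apply/eqP.
  + by apply/forallP => i; apply: H4.
  + apply/forallP => i; apply: H5; have := ltn_ord i; lia.
Qed.

Section Main.
Variables (T : finType) (e : rel T) (s t : T) (r : nat).
Hypothesis (He : simple_graph e) (Hst : s != t) (Hr : 2 <= r).

Definition midw (w : seq T) : seq T := rev (take r.-1 (behead w)).
Definition fw (w : r.+1.-tuple T) : (r - 2).+1.-tuple T :=
  insubd (nseq_tuple (r - 2).+1 s) (midw w).

Lemma size_midw (w : r.+1.-tuple T) : size (midw w) = (r - 2).+1.
Proof. rewrite /midw size_rev size_take size_behead size_tuple /=. have -> : r.-1 < r by lia. lia. Qed.

Lemma fwE (w : r.+1.-tuple T) : val (fw w) = midw w.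
Proof. by rewrite /fw val_insubd size_midw eqxx. Qed.

Lemma nth_midw (w : r.+1.-tuple T) i : i <= r - 2 ->
  nth s (midw w) i = nth s w (r - 1 - i).
Proof.
move=> Hi; rewrite /midw nth_rev; last by rewrite size_take size_behead size_tuple /=; case: ifP; lia.
rewrite size_take size_behead size_tuple /=. have -> : r.-1 < r by lia. rewrite nth_take; last by lia.
rewrite nth_behead; congr nth; lia.
Qed.

Lemma part1 : NBP e r s t <= NBPL e r s t + NBP e (r - 2) s t.
Proof.
case: He => Hsym Hirr.
rewrite /NBP /NBPL.
set A := [set w : r.+1.-tuple T | nb_walk e r s t w].
set B := [set w : r.+1.-tuple T |
   ~~ same_edge (nth s w r.-1) (nth s w r) (nth s w 0) (nth s w 1)].
rewrite -(cardsID B A).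
have -> : A :&: B = [set w : r.+1.-tuple T | nb_walk e r s t w &&
       ~~ same_edge (nth s w r.-1) (nth s w r) (nth s w 0) (nth s w 1)].
  by apply/setP => w; rewrite !inE.
rewrite leq_add2l.
have key : forall w, w \in A :\: B ->
   nb_walk e r s t w /\ nth s w r.-1 = s /\ nth s w 1 = t.
  move=> w; rewrite !inE negbK => /andP [Hs Hw]; have /nbP [H1 H2 H3 H4 H5] := Hw.
  move: Hs; rewrite /same_edge H2 H3 => /orP [/andP [/eqP H6 /eqP H7] | /andP [_ /eqP Hts]].
    by rewrite H6 -H7.
  by move: Hst; rewrite Hts eqxx.
rewrite -(card_in_imset (f := fw)).
  apply: subset_leq_card; apply/subsetP => y /imsetP [w Hw ->].
  have [/nbP [H1 H2 H3 H4 H5] [H6 H7]] := key w Hw.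
  rewrite inE; apply/nbP; rewrite fwE; split.
  - by rewrite size_midw.
  - rewrite nth_midw; last by lia. by have -> : r - 1 - 0 = r.-1 by lia.
  - rewrite nth_midw; last by lia. by have -> : r - 1 - (r - 2) = 1 by lia.
  - move=> i Hi; rewrite !nth_midw; try lia.
    rewrite Hsym.
    have -> : r - 1 - i = (r - 1 - i.+1).+1 by lia.
    apply: H4; lia.
  - move=> i Hi; rewrite !nth_midw; try lia.
    rewrite eq_sym.
    have -> : r - 1 - i = (r - 1 - i.+2).+2 by lia.
    apply: H5; lia.
move=> w1 w2 Hw1 Hw2 Hf.
have [/nbP [H1 H2 H3 _ _] _] := key w1 Hw1.
have [/nbP [H1' H2' H3' _ _] _] := key w2 Hw2.
apply: val_inj; apply: (@eq_from_nth _ s); first by rewrite H1 H1'.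
move=> i; rewrite H1 => Hi.
case: i Hi => [|i] Hi; first by rewrite H2 H2'.
have /eqP := Hf; rewrite -val_eqE /= !fwE => /eqP Hm.
case: (ltnP i r.-1) => Hi2.
- have := congr1 (fun m => nth s m (r - 2 - i)) Hm => /=.
  rewrite !nth_midw; try lia.
  by have -> : r - 1 - (r - 2 - i) = i.+1 by lia.
- have -> : i.+1 = r by lia. by rewrite H3 H3'.
Qed.

End Main.

Lemma NBP0 (T : finType) (e : rel T) (s t : T) : s != t -> NBP e 0 s t = 0.
Proof.
move=> Hst; apply/eqP; rewrite cards_eq0; apply/eqP/setP => w; rewrite !inE.
apply/negbTE/negP => /nbP [_ H2 H3 _ _].
by move: Hst; rewrite -H3 H2 eqxx.
Qed.

Lemma part2 (T : finType) (e : rel T) (s t : T) :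
  simple_graph e -> s != t -> forall r, 1 <= r ->
  NBP e r s t <= NBP e 1 s t + \sum_(2 <= m < r.+1) NBPL e m s t.
Proof.
move=> He Hst r; elim: r {-2}r (leqnn r) => [|n IH] r Hrn Hr.
  lia.
case: r Hrn Hr => [|[|[|k]]] Hrn Hr //.
- by rewrite big_geq // addn0.
- have := @part1 T e s t 2 He Hst isT; rewrite NBP0 // addn0 => H.
  by rewrite big_nat1 (leq_trans H) // leq_addl.
- have H := @part1 T e s t k.+3 He Hst isT.
  rewrite (big_nat_recr k.+3) //= (big_nat_recr k.+2) //=.
  have := IH k.+1 ltac:(lia) isT.
  move: H; have -> : k.+3 - 2 = k.+1 by lia. lia.
Qed.

Theorem mainTheorem6 (T : finType) (e : rel T) (s t : T) (r : nat) :
  simple_graph e -> s != t -> 2 <= r ->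
  NBP e r s t <= NBPL e r s t + NBP e (r - 2) s t /\
  NBP e r s t <= NBP e 1 s t + \sum_(2 <= m < r.+1) NBPL e m s t.
Proof.
move=> He Hst Hr; split; first exact: (@part1 T e s t r He Hst Hr).
apply: part2 => //; lia.
Qed.
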